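(* Let $\mathcal{P}$ be a partition of $\{1,\dots,n\}$ and $\mathcal{U}$ a subspace of $\mathbb{R}^n$. If $\mu_{\mathcal{P}}(\mathcal{U})<1/2$ then $\mathcal{U}$ is $\mathcal{P}$-realizable.
   Context: $P_{\mathcal{U}}$ is the orthogonal projector onto $\mathcal{U}$. For $\mathcal{I}\subseteq\{1,\dots,n\}$, $S^{\mathcal{I}}=\{x\in\mathbb{R}^n:\|x\|_2=1,\ x_j=0\text{ for }j\notin\mathcal{I}\}$. The $\mathcal{P}$-coherence is $\mu_{\mathcal{P}}(\mathcal{U})=\max_{\mathcal{I}\in\mathcal{P}}\max_{x\in S^{\mathcal{I}}}\|P_{\mathcal{U}}x\|_2^2$. $\mathcal{E}_{\mathcal{P}}=\{Y\succeq0: Y_{\mathcal{I}}=I\text{ for all }\mathcal{I}\in\mathcal{P}\}$ ($Y_{\mathcal{I}}$ the principal submatrix indexed by $\mathcal{I}$); $\mathcal{U}$ is $\mathcal{P}$-realizable if some $Y\in\mathcal{E}_{\mathcal{P}}$ has nullspace containing $\mathcal{U}$. *)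

(* Defs.v *)
From HB Require Import structures.
From mathcomp Require Import all_boot all_order all_algebra.
From mathcomp Require Import boolp classical_sets reals.
Set Implicit Arguments. Unset Strict Implicit. Unset Printing Implicit Defensive.
Import Order.TTheory GRing.Theory Num.Theory.
Local Open Scope ring_scope.

Section Defs.
Variables (R : realType) (n : nat).

(* Vectors of R^n are row vectors 'rV[R]_n; a subspace U of R^n is the row
   space of a matrix U : 'M[R]_n (every subspace arises this way). *)

Definition sqnorm (v : 'rV[R]_n) : R := \sum_i (v 0 i) ^+ 2.

Definition dotv (u v : 'rV[R]_n) : R := \sum_i u 0 i * v 0 i.

Definition orthproj (U : 'M[R]_n) (x : 'rV[R]_n) : 'rV[R]_n :=
  xget 0 [set p : 'rV[R]_n | (p <= U)%MS /\
            forall u : 'rV[R]_n, (u <= U)%MS -> dotv (x - p) u = 0].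

Definition unit_supp (I : {set 'I_n}) (x : 'rV[R]_n) : Prop :=
  sqnorm x = 1 /\ forall j : 'I_n, j \notin I -> x 0 j = 0.

(* P-coherence mu_P(U) = max_{I in P} max_{x in S^I} ||P_U x||_2^2
   (written as a supremum; the maximum is attained by compactness) *)
Definition coherence (P : {set {set 'I_n}}) (U : 'M[R]_n) : R :=
  sup [set r : R | exists I : {set 'I_n}, I \in P /\
         exists x : 'rV[R]_n, unit_supp I x /\ r = sqnorm (orthproj U x)].

Definition psd (Y : 'M[R]_n) : Prop :=
  Y^T = Y /\ forall x : 'rV[R]_n, 0 <= (x *m Y *m x^T) 0 0.

Definition in_EP (P : {set {set 'I_n}}) (Y : 'M[R]_n) : Prop :=
  psd Y /\ forall I : {set 'I_n}, I \in P ->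
    forall i j : 'I_n, i \in I -> j \in I -> Y i j = (i == j)%:R.

Definition realizable (P : {set {set 'I_n}}) (U : 'M[R]_n) : Prop :=
  exists Y : 'M[R]_n, in_EP P Y /\
    forall u : 'rV[R]_n, (u <= U)%MS -> Y *m u^T = 0.

End Defs.

(* Main.v *)
Require Import Defs.
From HB Require Import structures.
From mathcomp Require Import all_boot all_order all_algebra.
From mathcomp Require Import boolp classical_sets reals.
From mathcomp Require Import ring lra.
Import Order.TTheory GRing.Theory Num.Theory.
Local Open Scope ring_scope.
Set Implicit Arguments. Unset Strict Implicit. Unset Printing Implicit Defensive.

Section Basic.
Variables (R : realType) (n : nat).

Definition ip (u v : 'rV[R]_n) : R := (u *m v^T) 0 0.
Definition nrm (v : 'rV[R]_n) : R := ip v v.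
Definition qf (M : 'M[R]_n) (v : 'rV[R]_n) : R := (v *m M *m v^T) 0 0.

Lemma ipE u v : ip u v = \sum_k u 0 k * v 0 k.
Proof. by rewrite /ip mxE; apply: eq_bigr => k _; rewrite mxE. Qed.

Lemma ipC u v : ip u v = ip v u.
Proof. by rewrite !ipE; apply: eq_bigr => k _; rewrite mulrC. Qed.

Lemma ipDl u v w : ip (u + v) w = ip u w + ip v w.
Proof. by rewrite !ipE -big_split; apply: eq_bigr => k _; rewrite mxE mulrDl. Qed.
Lemma ipDr u v w : ip w (u + v) = ip w u + ip w v.
Proof. by rewrite ipC ipDl !(ipC w). Qed.
Lemma ipZl a u w : ip (a *: u) w = a * ip u w.
Proof. by rewrite !ipE mulr_sumr; apply: eq_bigr => k _; rewrite mxE mulrA. Qed.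
Lemma ipZr a u w : ip w (a *: u) = a * ip w u.
Proof. by rewrite ipC ipZl ipC. Qed.
Lemma ipNl u w : ip (- u) w = - ip u w.
Proof. by rewrite -scaleN1r ipZl mulN1r. Qed.
Lemma ipNr u w : ip w (- u) = - ip w u.
Proof. by rewrite ipC ipNl ipC. Qed.
Lemma ip0l w : ip 0 w = 0.
Proof. by rewrite /ip mul0mx mxE. Qed.
Lemma ip0r w : ip w 0 = 0.
Proof. by rewrite ipC ip0l. Qed.
Lemma ipBl u v w : ip (u - v) w = ip u w - ip v w.
Proof. by rewrite ipDl ipNl. Qed.
Lemma ipBr u v w : ip w (u - v) = ip w u - ip w v.
Proof. by rewrite ipDr ipNr. Qed.

Lemma nrm_ge0 v : 0 <= nrm v.
Proof. by rewrite /nrm ipE; apply: sumr_ge0 => k _; rewrite -expr2 sqr_ge0. Qed.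

Lemma nrm_eq0 v : nrm v = 0 -> v = 0.
Proof.
rewrite /nrm ipE => /eqP; rewrite psumr_eq0 => [/allP H|k _]; last by rewrite -expr2 sqr_ge0.
apply/rowP => k; rewrite mxE; have := H k (mem_index_enum k).
by rewrite -expr2 sqrf_eq0 => /eqP.
Qed.

Lemma CS u v : ip u v ^+ 2 <= nrm u * nrm v.
Proof.
have := nrm_ge0 (nrm v *: u - ip u v *: v).
rewrite /nrm !(ipBl, ipBr, ipZl, ipZr) (ipC v u).
have := nrm_ge0 v; have := nrm_ge0 u; rewrite /nrm.
set a := ip u u; set b := ip v v; set c := ip u v => ha hb H.
have [b0|bpos] := eqVneq b 0.
  have v0 : v = 0 by apply: nrm_eq0.
  by rewrite /c v0 ip0r expr0n /= b0 mulr0.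
have : 0 <= b * (a * b - c ^+ 2) by nra.
rewrite pmulr_rge0; first by lra.
by rewrite lt_def bpos hb.
Qed.

Lemma qfE M v : qf M v = ip (v *m M) v.
Proof. by []. Qed.


Lemma qfE2 M v : qf M v = \sum_i \sum_j v 0 i * M i j * v 0 j.
Proof.
rewrite /qf mxE exchange_big /=; apply: eq_bigr => j _.
by rewrite !mxE mulr_suml.
Qed.

Lemma coord_le (v : 'rV[R]_n) i : v 0 i ^+ 2 <= nrm v.
Proof.
rewrite /nrm ipE (bigD1 i) //= -expr2 lerDl; apply: sumr_ge0 => k _.
by rewrite -expr2 sqr_ge0.
Qed.

Lemma qf_bound (M : 'M[R]_n) (v : 'rV[R]_n) : `|qf M v| <= (\sum_i \sum_j `|M i j|) * nrm v.
Proof.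
rewrite qfE2 mulr_suml; apply: (le_trans (ler_norm_sum _ _ _)).
apply: ler_sum => i _; rewrite mulr_suml.
apply: (le_trans (ler_norm_sum _ _ _)); apply: ler_sum => j _.
rewrite !normrM.
have hpq : `|v 0 i| * `|v 0 j| <= nrm v.
  have hi := coord_le v i; have hj := coord_le v j.
  rewrite -(real_normK (num_real (v 0 i))) in hi.
  rewrite -(real_normK (num_real (v 0 j))) in hj.
  have := normr_ge0 (v 0 i); have := normr_ge0 (v 0 j).
  set p := `|v 0 i| in hi *; set q := `|v 0 j| in hj *; move=> *.
  nra.
by rewrite mulrAC mulrC ler_wpM2l.
Qed.

Lemma qf_scalar (c : R) (v : 'rV[R]_n) : qf c%:M v = c * nrm v.
Proof. by rewrite /qf mul_mx_scalar -scalemxAl mxE. Qed.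

Lemma nrm0 : nrm (0 : 'rV[R]_n) = 0.
Proof. exact: ip0l. Qed.

Lemma qf0 (M : 'M[R]_n) : qf M 0 = 0.
Proof. by rewrite /qf !mul0mx mxE. Qed.


Lemma ip_tr (M : 'M[R]_n) u v : ip (v *m M) u = ip (u *m M^T) v.
Proof.
have e : u *m M^T *m v^T = (v *m M *m u^T)^T by rewrite !trmx_mul trmxK mulmxA.
by rewrite /ip e [in RHS]mxE.
Qed.

Lemma sym_qf0 (M : 'M[R]_n) : M^T = M -> (forall v, qf M v = 0) -> M = 0.
Proof.
move=> Ms h0.
have h u v : ip (u *m M) v = 0.
  have := h0 (u + v); rewrite qfE mulmxDl !(ipDl, ipDr) -!qfE !h0.
  rewrite (ip_tr M u v) Ms => e.
  have : 2 * ip (u *m M) v = 0 by rewrite mulr2n mulrDl mul1r -e add0r addr0.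
  by move/eqP; rewrite mulf_eq0 pnatr_eq0 /= => /eqP.
apply/row_matrixP => i; rewrite row0 rowE.
apply: nrm_eq0; exact: h.
Qed.

End Basic.

Section Proj.
Variables (R : realType) (n : nat) (U : 'M[R]_n).

Variables (r : nat) (B : 'M[R]_(r, n)).
Hypotheses (Bfree : row_free B) (BU : (B :=: U)%MS).
Let G := B *m B^T.

Lemma G_unit : G \in unitmx.
Proof.
rewrite -row_free_unit; apply: inj_row_free => v vG.
have : ((v *m B) *m (v *m B)^T) 0 0 = 0.
  by rewrite trmx_mul mulmxA -(mulmxA v) -/G vG mul0mx mxE.
move/(@nrm_eq0 R n) => /eqP; rewrite mulmx_free_eq0 ?Bfree //.
by move/eqP.
Qed.

Definition projm : 'M[R]_n := B^T *m invmx G *m B.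

Lemma G_sym : G^T = G.
Proof. by rewrite /G trmx_mul trmxK. Qed.

Lemma projm_sym : projm^T = projm.
Proof. by rewrite /projm !trmx_mul trmxK trmx_inv G_sym mulmxA. Qed.

Lemma projm_fix (u : 'rV[R]_n) : (u <= U)%MS -> u *m projm = u.
Proof.
move=> uU; have : (u <= B)%MS by rewrite BU.
case/submxP => w ->.
by rewrite /projm !mulmxA -(mulmxA w) -/G mulmxK // G_unit.
Qed.

Lemma projm_sub (x : 'rV[R]_n) : (x *m projm <= U)%MS.
Proof. by rewrite -BU /projm mulmxA submxMl. Qed.

Lemma projm_orth (x u : 'rV[R]_n) : (u <= U)%MS -> ip (x - x *m projm) u = 0.
Proof.
move=> uU; have : (u <= B)%MS by rewrite BU.
case/submxP => w ->.
rewrite /ip trmx_mul mulmxBl /projm -!mulmxA (mulmxA B) -/G (mulmxA (invmx G)) mulVmx ?G_unit //.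
by rewrite mul1mx subrr mxE.
Qed.

Lemma projm_idem : projm *m projm = projm.
Proof.
apply/row_matrixP => i; rewrite row_mul; apply: projm_fix; rewrite rowE; exact: projm_sub.
Qed.

Lemma dotvE (u v : 'rV[R]_n) : dotv u v = ip u v.
Proof. by rewrite ipE. Qed.
Lemma sqnormE (v : 'rV[R]_n) : sqnorm v = nrm v.
Proof. by rewrite /nrm ipE /sqnorm; apply: eq_bigr => k _; rewrite expr2. Qed.

Lemma orthprojE (x : 'rV[R]_n) : orthproj U x = x *m projm.
Proof.
rewrite /orthproj; apply: xget_unique.
  by split; [exact: projm_sub | move=> u uU; rewrite dotvE projm_orth].
move=> p [pU porth].
have d : (p - x *m projm <= U)%MS by rewrite addmx_sub ?eqmx_opp ?projm_sub.
apply/eqP; rewrite -subr_eq0; apply/eqP/nrm_eq0.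
have e : p - x *m projm = (x - x *m projm) - (x - p) by rewrite [RHS]addrC opprB addrA addrNK.
rewrite /nrm {2}e ipBr ipC projm_orth // (ipC _ (x - p)) -dotvE porth //.
by rewrite subrr.
Qed.

End Proj.

Section Blocks.
Import finset.
Variables (R : realType) (n : nat) (P : {set {set 'I_n}}).
Hypothesis Ppart : finset.partition P [set: 'I_n].

Lemma triv : finset.trivIset P.
Proof. by case/and3P: Ppart. Qed.

Lemma pb_mem i : finset.pblock P i \in P.
Proof. by apply: finset.pblock_mem; rewrite (finset.cover_partition Ppart) inE. Qed.

Lemma in_pb i : i \in finset.pblock P i.
Proof. by rewrite finset.mem_pblock (finset.cover_partition Ppart) inE. Qed.

Lemma pb_eq I i : I \in P -> i \in I -> finset.pblock P i = I.
Proof. by move=> IP iI; apply: finset.def_pblock => //; exact: triv. Qed.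

Definition blk (I : {set 'I_n}) : 'M[R]_n := diag_mx (\row_i ((i \in I)%:R)).

Lemma blk_sym I : (blk I)^T = blk I.
Proof. exact: tr_diag_mx. Qed.

Lemma blkM I J : I \in P -> J \in P ->
  blk I *m blk J = if I == J then blk I else 0.
Proof.
move=> IP JP; rewrite /blk mulmx_diag; case: eqP => [<-|IJ].
  by congr diag_mx; apply/rowP => j; rewrite !mxE; case: (j \in I); rewrite ?mulr1 ?mulr0.
apply/matrixP => i j; rewrite !mxE.
case iI: (i \in I); case iJ: (i \in J); rewrite ?mulr0 ?mul0r ?mul0rn //.
by exfalso; apply: IJ; rewrite -(pb_eq IP iI) (pb_eq JP iJ).
Qed.

Lemma blkK I : I \in P -> blk I *m blk I = blk I.
Proof. by move=> IP; rewrite blkM // eqxx. Qed.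

Lemma sum_ind i : \sum_(I in P) ((i \in I)%:R : R) = 1.
Proof.
rewrite (bigD1 (finset.pblock P i)) ?pb_mem //= in_pb big1 ?addr0 // => I /andP[IP IJ].
case iI: (i \in I) => //; exfalso; move/negP: IJ; apply; apply/eqP.
by rewrite (pb_eq IP iI).
Qed.

Lemma blk_sum : \sum_(I in P) blk I = 1%:M.
Proof.
apply/matrixP => i j; rewrite summxE !mxE.
under eq_bigr => I _ do rewrite !mxE.
by rewrite sumrMnl sum_ind.
Qed.

Definition bd (M : 'M[R]_n) : 'M[R]_n := \sum_(I in P) blk I *m M *m blk I.

Lemma blk_entry I (M : 'M[R]_n) i j :
  (blk I *m M *m blk I) i j = (i \in I)%:R * M i j * (j \in I)%:R.
Proof. by rewrite /blk mul_mx_diag mul_diag_mx !mxE. Qed.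

Lemma pb_sym i j : (j \in finset.pblock P i) = (i \in finset.pblock P j).
Proof.
apply/idP/idP => h.
  by rewrite (pb_eq (pb_mem i) h) in_pb.
by rewrite (pb_eq (pb_mem j) h) in_pb.
Qed.

Lemma bdE M : bd M = \matrix_(i, j) (M i j * (j \in finset.pblock P i)%:R).
Proof.
apply/matrixP => i j; rewrite /bd summxE !mxE.
under eq_bigr => I _ do rewrite blk_entry.
rewrite (bigD1 (finset.pblock P i)) ?pb_mem //= in_pb mul1r big1 ?addr0 // => I /andP[IP IJ].
case iI: (i \in I); last by rewrite !mul0r.
by exfalso; move/negP: IJ; apply; apply/eqP; rewrite (pb_eq IP iI).
Qed.

Lemma bd_bd M : bd (bd M) = bd M.
Proof.
by apply/matrixP => i j; rewrite !bdE !mxE; case: (j \in finset.pblock P i); rewrite ?mulr1 ?mulr0.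
Qed.

Lemma bd_tr M : bd (M^T) = (bd M)^T.
Proof. by apply/matrixP => i j; rewrite !bdE !mxE pb_sym. Qed.

Lemma bd1 : bd 1%:M = 1%:M.
Proof.
apply/matrixP => i j; rewrite !bdE !mxE.
by case: eqP => [->|_]; rewrite ?in_pb ?mulr1 ?mul0r.
Qed.

Lemma bdD M N : bd (M + N) = bd M + bd N.
Proof. by apply/matrixP => i j; rewrite !(bdE, mxE) mulrDl. Qed.
Lemma bdZ a M : bd (a *: M) = a *: bd M.
Proof. by apply/matrixP => i j; rewrite !(bdE, mxE) mulrA. Qed.
Lemma bdN M : bd (- M) = - bd M.
Proof. by apply/matrixP => i j; rewrite !(bdE, mxE) mulNr. Qed.
Lemma bd0 : bd 0 = 0.
Proof. by apply/matrixP => i j; rewrite !(bdE, mxE) mul0r. Qed.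

Lemma bd_entry_in I M i j : I \in P -> i \in I -> j \in I -> bd M i j = M i j.
Proof. by move=> IP iI jI; rewrite bdE mxE (pb_eq IP iI) jI mulr1. Qed.

Lemma bd_blk M J : J \in P -> bd M *m blk J = blk J *m M *m blk J.
Proof.
move=> JP; rewrite /bd mulmx_suml (bigD1 J) //= big1 ?addr0.
  by rewrite -mulmxA blkK.
by move=> I /andP[IP IJ]; rewrite -mulmxA blkM // (negPf IJ) mulmx0.
Qed.

Lemma qf_bd M (w : 'rV[R]_n) : qf (bd M) w = \sum_(I in P) qf M (w *m blk I).
Proof.
rewrite /qf /bd mulmx_sumr mulmx_suml summxE; apply: eq_bigr => I _.
by rewrite trmx_mul blk_sym !mulmxA.
Qed.

Lemma qf1 (w : 'rV[R]_n) : qf 1%:M w = nrm w.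
Proof. by rewrite /qf mulmx1. Qed.

Lemma nrm_blk (w : 'rV[R]_n) : nrm w = \sum_(I in P) nrm (w *m blk I).
Proof.
by rewrite -qf1 -bd1 qf_bd; apply: eq_bigr => I _; rewrite qf1.
Qed.

Lemma ip_blk I (u v : 'rV[R]_n) : ip (u *m blk I) v = ip u (v *m blk I).
Proof. by rewrite /ip trmx_mul blk_sym mulmxA. Qed.

End Blocks.
Arguments blk {R n} I.
Arguments bd {R n} P M.
Arguments triv {n P}.
Arguments pb_mem {n P}.
Arguments in_pb {n P}.
Arguments pb_eq {n P}.
Arguments pb_sym {n P}.
Arguments blkM {R n P}.
Arguments blkK {R n P}.
Arguments sum_ind {R n P}.
Arguments blk_sum {R n P}.
Arguments bdE {R n P}.
Arguments bd_bd {R n P}.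
Arguments bd_tr {R n P}.
Arguments bd1 {R n P}.
Arguments bdD {R n P}.
Arguments bdZ {R n P}.
Arguments bdN {R n P}.
Arguments bd0 {R n P}.
Arguments bd_entry_in {R n P}.
Arguments bd_blk {R n P}.
Arguments nrm_blk {R n P}.

Section Core1.
Variables (R : realType) (n : nat) (P : {set {set 'I_n}}).
Hypothesis Ppart : finset.partition P [set: 'I_n].
Variables (Q : 'M[R]_n) (mu : R).
Hypotheses (Qsym : Q^T = Q) (Qidem : Q *m Q = Q) (mu0 : 0 <= mu) (mu2 : mu < 1/2).
Hypothesis Hmu : forall I, I \in P -> forall y : 'rV[R]_n,
  y *m blk I = y -> qf Q y <= mu * nrm y.

Definition Pp : 'M[R]_n := 1%:M - Q.
Definition Dl : 'M[R]_n := bd P Pp.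
Definition rho : R := mu * (1 - mu).

Lemma Pp_sym : Pp^T = Pp.
Proof. by rewrite /Pp linearB /= trmx1 Qsym. Qed.

Lemma qfQ v : qf Q v = nrm (v *m Q).
Proof. by rewrite /nrm /ip /qf trmx_mul Qsym !mulmxA -(mulmxA v Q Q) Qidem. Qed.

Lemma qf_ge0Q v : 0 <= qf Q v.
Proof. by rewrite qfQ nrm_ge0. Qed.

Lemma qf_Pp v : qf Pp v = nrm v - qf Q v.
Proof. by rewrite /qf /Pp mulmxBr mulmx1 mulmxBl [X in X = _]mxE [X in _ + X = _]mxE. Qed.

Lemma qfN M (w : 'rV[R]_n) : qf M (- w) = qf M w.
Proof. by rewrite /qf linearN /= mulmxN !mulNmx opprK. Qed.

Lemma HmuI I x : I \in P -> qf Q (x *m blk I) <= mu * nrm (x *m blk I).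
Proof. by move=> IP; apply: (Hmu IP); rewrite -mulmxA (blkK Ppart). Qed.

Lemma off_one I x : I \in P ->
  \sum_(J in P | J != I) nrm (x *m blk I *m Q *m blk J) <= rho * nrm (x *m blk I).
Proof.
move=> IP; set v := x *m blk I.
have e : nrm (v *m Q) = nrm (v *m Q *m blk I) +
    \sum_(J in P | J != I) nrm (v *m Q *m blk J).
  by rewrite (nrm_blk Ppart) (bigD1 I).
have ht : qf Q v <= mu * nrm v by exact: HmuI.
have t0 := qf_ge0Q v.
have ipt : ip (v *m Q *m blk I) v = qf Q v.
  by rewrite ip_blk /v -(mulmxA x (blk I) (blk I)) (blkK Ppart) // qfE -ipC qfQ /nrm. 
have cs := CS (v *m Q *m blk I) v.
rewrite ipt in cs.
have hv := nrm_ge0 v. have hw := nrm_ge0 (v *m Q *m blk I).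
rewrite -qfQ in e.
set S := \sum_(J in P | J != I) _ in e *.
have S_eq : S = qf Q v - nrm (v *m Q *m blk I) by rewrite e addrC addKr.
rewrite S_eq /rho.
set t := qf Q v in ht t0 cs S_eq *; set w := nrm (v *m Q *m blk I) in hw cs S_eq *.
set N := nrm v in hv ht cs *.
have [N0|Npos] := eqVneq N 0.
  by move: ht; rewrite N0 mulr0 => ht; rewrite mulr0; lra.
have Ngt : 0 < N by rewrite lt_def Npos hv.
suff : N * (t - w) <= N * (mu * (1 - mu) * N) by rewrite ler_pM2l.
have h1 : 0 <= mu * N - t by lra.
have m2 := mu2; have m0 := mu0.
have h2' : 0 <= N * (1 - 2 * mu) by apply: mulr_ge0; lra.
have h2 : 0 <= N - t - mu * N by lra.
have h3 := mulr_ge0 h1 h2.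
nra.
Qed.

Definition offn x := \sum_(I in P) \sum_(J in P | J != I) nrm (x *m blk I *m Q *m blk J).

Lemma offn_le x : offn x <= rho * nrm x.
Proof.
rewrite (nrm_blk Ppart x) mulr_sumr; apply: ler_sum => I IP; exact: off_one.
Qed.

Definition off (Z : 'M[R]_n) x :=
  \sum_(I in P) \sum_(J in P | J != I) qf Z (x *m blk I *m Q *m blk J).

Lemma Dl_blk J : J \in P -> Dl *m blk J = blk J *m Pp *m blk J.
Proof. by move=> JP; rewrite /Dl (bd_blk Ppart). Qed.

Lemma decomp (Z : 'M[R]_n) x : bd P Z = Z ->
  qf (bd P (Pp *m Z *m Pp)) x = qf Z (x *m Dl) + off Z x.
Proof.
move=> hZ.
have qfZ w : qf Z w = \sum_(J in P) qf Z (w *m blk J) by rewrite -{1}hZ qf_bd.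
rewrite qf_bd qfZ /off -big_split /=; apply: eq_bigr => I IP.
have -> : qf (Pp *m Z *m Pp) (x *m blk I) = qf Z (x *m blk I *m Pp).
  by rewrite /qf [in RHS]trmx_mul Pp_sym !mulmxA.
rewrite qfZ (bigD1 I) //=; congr (_ + _).
  by rewrite -(mulmxA x Dl) Dl_blk // !mulmxA.
apply: eq_bigr => J /andP[JP JI].
rewrite /Pp mulmxBr mulmx1 mulmxBl -(mulmxA x (blk I) (blk J)) (blkM Ppart) // eq_sym (negPf JI) mulmx0 sub0r qfN.
by [].
Qed.

Lemma Dl_ge x : (1 - mu) * nrm x <= qf Dl x.
Proof.
rewrite /Dl qf_bd (nrm_blk Ppart x) mulr_sumr; apply: ler_sum => I IP.
rewrite qf_Pp; have := HmuI x IP; have m2 := mu2; lra.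
Qed.

Lemma Dl_unit : Dl \in unitmx.
Proof.
rewrite -row_free_unit; apply: inj_row_free => v vD.
apply: nrm_eq0; have := Dl_ge v; rewrite /qf vD mul0mx mxE => h.
apply/le_anti; rewrite nrm_ge0 andbT.
have : 0 < 1 - mu by have := mu2; lra.
move=> h1; rewrite -(pmulr_rle0 _ h1); exact: h.
Qed.

Lemma Dl_inv y : let x := y *m invmx Dl in
  x *m Dl = y /\ (1 - mu) ^+ 2 * nrm x <= nrm y.
Proof.
move=> x; have xD : x *m Dl = y by rewrite /x mulmxKV // Dl_unit.
split => //.
have h := Dl_ge x; have cs := CS y x.
have e : qf Dl x = ip y x by rewrite /qf -xD.
rewrite e in h; have hx := nrm_ge0 x; have hy := nrm_ge0 y.
have m2 := mu2; have hm : 0 < 1 - mu by lra.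
have [x0|xpos] := eqVneq (nrm x) 0.
  by rewrite x0 mulr0.
have xgt : 0 < nrm x by rewrite lt_def xpos hx.
suff : nrm x * ((1 - mu) ^+ 2 * nrm x) <= nrm x * nrm y by rewrite ler_pM2l.
have hp : 0 <= (1 - mu) * nrm x by apply: mulr_ge0; lra.
have h2 : ((1 - mu) * nrm x) ^+ 2 <= ip y x ^+ 2.
  by rewrite ler_sqr ?nnegrE //; lra.
have h3 : ((1 - mu) * nrm x) ^+ 2 <= nrm y * nrm x by lra.
move: h3; rewrite expr2 -!mulrA [nrm x * _]mulrC !mulrA [_ * nrm y]mulrC.
nra.
Qed.

End Core1.

Section Sup.
Variables (R : realType) (n : nat).

Definition Sf (f : 'rV[R]_n -> R) : R := sup [set r | exists y, r = f y / nrm y]%classic.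

Lemma Sf_props f K : (forall y, f y <= K * nrm y) ->
  [/\ 0 <= Sf f, (forall y, f y <= Sf f * nrm y) &
      (forall k, 0 <= k -> (forall y, f y <= k * nrm y) -> Sf f <= k)].
Proof.
move=> hK.
set E := [set r | exists y, r = f y / nrm y]%classic.
have E0 : E 0 by exists 0; rewrite nrm0 invr0 mulr0.
have ubk k : 0 <= k -> (forall y, f y <= k * nrm y) -> ubound E k.
  move=> k0 hk r [y ->].
  have [y0|ypos] := eqVneq (nrm y) 0; first by rewrite y0 invr0 mulr0.
  have ygt : 0 < nrm y by rewrite lt_def ypos nrm_ge0.
  by rewrite ler_pdivrMr.
have hs : has_sup E.
  split; first by exists 0.
  exists (Num.max K 0); apply: ubk; first by rewrite le_max lexx orbT.
  move=> y; apply: (le_trans (hK y)); apply: ler_wpM2r; first exact: nrm_ge0.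
  by rewrite le_max lexx.
have sub := sup_upper_bound hs.
split.
- exact: sub.
- move=> y; have [y0|ypos] := eqVneq (nrm y) 0.
    by rewrite (nrm_eq0 y0) nrm0 mulr0; have := hK 0; rewrite nrm0 mulr0.
  have ygt : 0 < nrm y by rewrite lt_def ypos nrm_ge0.
  by rewrite -ler_pdivrMr //; apply: sub; exists y.
- move=> k k0 hk; apply: ge_sup; first by exists 0.
  exact: ubk.
Qed.

End Sup.

Section Core2.
Variables (R : realType) (n : nat) (P : {set {set 'I_n}}).
Hypothesis Ppart : finset.partition P [set: 'I_n].
Variables (Q : 'M[R]_n) (mu : R).
Hypotheses (Qsym : Q^T = Q) (Qidem : Q *m Q = Q) (mu0 : 0 <= mu) (mu2 : mu < 1/2).
Hypothesis Hmu : forall I, I \in P -> forall y : 'rV[R]_n,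
  y *m blk I = y -> qf Q y <= mu * nrm y.

Let Ppm := Pp Q.
Let Dlm := Dl P Q.

Lemma off_lo (Z : 'M[R]_n) a x : 0 <= a -> (forall w, - (a * nrm w) <= qf Z w) ->
  - (a * (rho mu * nrm x)) <= off P Q Z x.
Proof.
move=> a0 ha.
have h1 : - (a * offn P Q x) <= off P Q Z x.
  rewrite /off /offn mulr_sumr -sumrN; apply: ler_sum => I _.
  rewrite mulr_sumr -sumrN; apply: ler_sum => J _; exact: ha.
have h2 := offn_le Ppart Qsym Qidem mu0 mu2 Hmu x.
have h3 : a * offn P Q x <= a * (rho mu * nrm x) by apply: ler_wpM2l.
lra.
Qed.

Lemma off_hi (Z : 'M[R]_n) b x : 0 <= b -> (forall w, qf Z w <= b * nrm w) ->
  off P Q Z x <= b * (rho mu * nrm x).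
Proof.
move=> b0 hb.
have h1 : off P Q Z x <= b * offn P Q x.
  rewrite /off /offn mulr_sumr; apply: ler_sum => I _.
  rewrite mulr_sumr; apply: ler_sum => J _; exact: hb.
have h2 := offn_le Ppart Qsym Qidem mu0 mu2 Hmu x.
have h3 : b * offn P Q x <= b * (rho mu * nrm x) by apply: ler_wpM2l.
lra.
Qed.


Lemma core (Z : 'M[R]_n) (c : R) : (c = 0 \/ c = 1) -> bd P Z = Z ->
  bd P (Pp Q *m Z *m Pp Q) = c%:M ->
  (forall y, 0 <= qf Z y) /\ (c = 0 -> forall y, qf Z y <= 0).
Proof.
move=> hc hZ hE.
have m2 := mu2; have m0 := mu0.
have c0 : 0 <= c by case: hc => ->; lra.
set K := \sum_i \sum_j `|Z i j|.
have hK1 y : qf Z y <= K * nrm y.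
  exact: le_trans (ler_norm _) (qf_bound Z y).
have hK2 y : - qf Z y <= K * nrm y.
  by apply: le_trans (qf_bound Z y); rewrite -normrN ler_norm.
have [a0 aub ale] := Sf_props hK2.
have [b0 bub ble] := Sf_props hK1.
set a := Sf (fun y => - qf Z y) in a0 aub ale.
set b := Sf (qf Z) in b0 bub ble.
have qlo w : - (a * nrm w) <= qf Z w by have := aub w; lra.
have qhi w : qf Z w <= b * nrm w by exact: bub w.
have hm : 0 < 1 - mu by lra.
set kap := ((1 - mu) ^+ 2)^-1.
have kap0 : 0 < kap by rewrite invr_gt0 exprn_gt0.
have kapE : kap * (1 - mu) ^+ 2 = 1 by rewrite mulVf // expf_neq0 // lt0r_neq0.
have rho0 : 0 <= rho mu by rewrite /rho; apply: mulr_ge0; lra.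
set r := rho mu * kap.
have r0 : 0 <= r by apply: mulr_ge0 => //; exact: ltW.
have rE : r * (1 - mu) = mu.
  rewrite /r /rho /kap; field; by rewrite lt0r_neq0.
have r1 : r < 1 by nra.
have key y : exists x, c * nrm x = qf Z y + off P Q Z x /\ nrm x <= kap * nrm y.
  have [xD hx] := Dl_inv Ppart mu2 Hmu y.
  set x := y *m invmx (Dl P Q) in xD hx.
  exists x; split.
    by rewrite -qf_scalar -hE decomp // xD.
  have : kap * ((1 - mu) ^+ 2 * nrm x) <= kap * nrm y by apply: ler_wpM2l => //; exact: ltW.
  by rewrite mulrA kapE mul1r.
have hb : b <= (c + a * rho mu) * kap.
  apply: ble; first by apply: mulr_ge0; [apply: addr_ge0 => //; exact: mulr_ge0 | exact: ltW].
  move=> y; have [x [e hx]] := key y.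
  have hl := @off_lo Z a x a0 qlo.
  have hcx : 0 <= c + a * rho mu by apply: addr_ge0 => //; exact: mulr_ge0.
  have hh : (c + a * rho mu) * nrm x <= (c + a * rho mu) * (kap * nrm y) by apply: ler_wpM2l.
  rewrite [_ * (kap * _)]mulrA in hh; lra.
have ha : a <= Num.max 0 ((b * rho mu - c) * kap).
  apply: ale; first by rewrite le_max lexx.
  move=> y; have [x [e hx]] := key y.
  have hl := @off_hi Z b x b0 qhi.
  have hx0 := nrm_ge0 x; have hy0 := nrm_ge0 y.
  case: (lerP (b * rho mu - c) 0) => hbc.
    have : (b * rho mu - c) * nrm x <= 0 by apply: mulr_le0_ge0.
    have : 0 <= Num.max 0 ((b * rho mu - c) * kap) * nrm y.
      by apply: mulr_ge0 => //; rewrite le_max lexx.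
    move=> *; lra.
  have hbc' : 0 <= (b * rho mu - c) by exact: ltW.
  have : (b * rho mu - c) * nrm x <= (b * rho mu - c) * (kap * nrm y) by apply: ler_wpM2l.
  have : (b * rho mu - c) * kap <= Num.max 0 ((b * rho mu - c) * kap) by rewrite le_max lexx orbT.
  move=> hmax hh.
  have : (b * rho mu - c) * kap * nrm y <= Num.max 0 ((b * rho mu - c) * kap) * nrm y.
    by apply: ler_wpM2r.
  rewrite [_ * (kap * _)]mulrA in hh; lra.
have aeq : a = 0.
  apply/le_anti; rewrite a0 andbT.
  move: ha; case: (lerP (b * rho mu - c) 0) => hbc.
    have : (b * rho mu - c) * kap <= 0 by apply: mulr_le0_ge0 => //; exact: ltW.
    by move=> h; rewrite max_l.
  have hpos : 0 < (b * rho mu - c) * kap by apply: mulr_gt0.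
  rewrite max_r; last exact: ltW.
  move=> ha.
  have hb' : b * r <= (c + a * rho mu) * kap * r by apply: ler_wpM2r.
  have e1 : (b * rho mu - c) * kap = b * r - c * kap by rewrite /r; ring.
  have e2 : (c + a * rho mu) * kap * r = c * kap * r + a * r * r by rewrite /r; ring.
  rewrite e1 in ha; rewrite e2 in hb'.
  case: hc => hc; rewrite hc in ha hb' *.
    have hr : 0 < 1 - r * r by nra.
    have h : (1 - r * r) * a <= 0 by nra.
    by rewrite -(pmulr_rle0 _ hr).
  exfalso.
  have f1 : a * (1 - r * r) <= kap * (r - 1) by nra.
  have f2 : 0 <= a * (1 - r * r) by apply: mulr_ge0 => //; nra.
  have f3 : kap * (r - 1) < 0 by rewrite pmulr_rlt0 //; lra.
  have := le_lt_trans (le_trans f2 f1) f3; by rewrite ltxx.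
split.
  by move=> y; have := qlo y; rewrite aeq mul0r oppr0.
move=> hc0 y; have := qhi y; rewrite hc0 aeq mul0r addr0 mul0r in hb.
have -> : b = 0 by apply/le_anti; rewrite b0 andbT.
by rewrite mul0r.
Qed.

End Core2.

Section Lin.
Variables (R : realType) (n : nat) (P : {set {set 'I_n}}).
Hypothesis Ppart : finset.partition P [set: 'I_n].
Variables (Q : 'M[R]_n) (mu : R).
Hypotheses (Qsym : Q^T = Q) (Qidem : Q *m Q = Q) (mu0 : 0 <= mu) (mu2 : mu < 1/2).
Hypothesis Hmu : forall I, I \in P -> forall y : 'rV[R]_n,
  y *m blk I = y -> qf Q y <= mu * nrm y.

Definition sym (Z : 'M[R]_n) : 'M[R]_n := 2^-1 *: (Z + Z^T).

Lemma symD Z W : sym (Z + W) = sym Z + sym W.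
Proof. by rewrite /sym [(_ + _)^T]linearD /= addrACA scalerDr. Qed.
Lemma symZ a Z : sym (a *: Z) = a *: sym Z.
Proof. by rewrite /sym linearZ /= -scalerDr !scalerA mulrC. Qed.
Lemma sym_tr Z : (sym Z)^T = sym Z.
Proof. by rewrite /sym linearZ /= linearD /= trmxK addrC. Qed.
Lemma sym_id Z : Z^T = Z -> sym Z = Z.
Proof.
move=> h; rewrite /sym h -mulr2n -scaler_nat scalerA.
by rewrite mulVf ?scale1r // pnatr_eq0.
Qed.

Let Pm := Pp Q.
Definition Bof (Z : 'M[R]_n) := bd P (sym Z).
Definition Phi (Z : 'M[R]_n) : 'M[R]_n :=
  Z - Bof Z + bd P (Pm *m Bof Z *m Pm).

Lemma BofD Z W : Bof (Z + W) = Bof Z + Bof W.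
Proof. by rewrite /Bof symD (bdD Ppart). Qed.
Lemma BofZ a Z : Bof (a *: Z) = a *: Bof Z.
Proof. by rewrite /Bof symZ (bdZ Ppart). Qed.

Lemma zmod6 (V : zmodType) (x y z u v t : V) :
  x + y - (z + u) + (v + t) = (x - z + v) + (y - u + t).
Proof. by rewrite opprD [x + y + _]addrACA [LHS]addrACA. Qed.

Lemma bdL (A X Y : 'M[R]_n) a :
  bd P (A *m (a *: X + Y) *m A) = a *: bd P (A *m X *m A) + bd P (A *m Y *m A).
Proof. by rewrite mulmxDr mulmxDl -scalemxAr -scalemxAl (bdD Ppart) (bdZ Ppart). Qed.

Lemma Phi_lin : linear Phi.
Proof.
move=> a Z W; rewrite /Phi BofD BofZ.
by rewrite bdL zmod6 -scalerBr -scalerDr.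
Qed.

Lemma Bof_tr Z : (Bof Z)^T = Bof Z.
Proof. by rewrite /Bof -(bd_tr Ppart) sym_tr. Qed.
Lemma Bof_bd Z : bd P (Bof Z) = Bof Z.
Proof. exact: bd_bd. Qed.

Lemma bd_sym_Phi Z : bd P (sym (Phi Z)) = bd P (Pm *m Bof Z *m Pm).
Proof.
rewrite /Phi !symD -scaleN1r symZ scaleN1r.
have t1 : (bd P (Pm *m Bof Z *m Pm))^T = bd P (Pm *m Bof Z *m Pm).
  by rewrite -(bd_tr Ppart) !trmx_mul Bof_tr /Pm Pp_sym // mulmxA.
rewrite (sym_id (Bof_tr Z)) (sym_id t1) !(bdD Ppart) (bdN Ppart) (bd_bd Ppart).
by rewrite -/(Bof Z) Bof_bd addrN add0r.
Qed.

Lemma Phi_inj Z : Phi Z = 0 -> Z = 0.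
Proof.
move=> h.
have e := bd_sym_Phi Z; rewrite h in e.
have s0 : sym 0 = 0 by rewrite /sym linear0 addr0 scaler0.
rewrite s0 (bd0 Ppart) in e.
have hc : bd P (Pp Q *m Bof Z *m Pp Q) = 0%:M.
  by rewrite -e; apply/matrixP => i j; rewrite !mxE mul0rn.
have [_ h2] := core Ppart Qsym Qidem mu0 mu2 Hmu (or_introl erefl) (Bof_bd Z) hc.
have [h1 _] := core Ppart Qsym Qidem mu0 mu2 Hmu (or_introl erefl) (Bof_bd Z) hc.
have B0 : Bof Z = 0.
  apply: sym_qf0; first exact: Bof_tr.
  by move=> v; apply/le_anti; rewrite h1 h2.
by move: h; rewrite /Phi B0 mulmx0 mul0mx (bd0 Ppart) subr0 addr0.
Qed.

Lemma exists_B : exists B : 'M[R]_n, [/\ B^T = B, bd P B = B,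
  bd P (Pp Q *m B *m Pp Q) = 1%:M & forall y, 0 <= qf B y].
Proof.
pose L : {linear 'M[R]_n -> 'M[R]_n} := HB.pack Phi (GRing.isLinear.Build _ _ _ _ Phi Phi_lin).
pose M := lin_mx L.
have Mfree : row_free M.
  apply: inj_row_free => v vM.
  have : mxvec (L (vec_mx v)) = mxvec 0 by rewrite -mul_rV_lin -/M vM linear0.
  move/(can_inj mxvecK) => /Phi_inj hv.
  by rewrite -(vec_mxK v) hv linear0.
have Mu : M \in unitmx by rewrite -row_free_unit.
pose Z := vec_mx (mxvec (1%:M : 'M[R]_n) *m invmx M).
have hZ : Phi Z = 1%:M.
  have : L Z = vec_mx (mxvec Z *m M) by rewrite mx_vec_lin.
  by rewrite /Z vec_mxK mulmxKV // mxvecK.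
exists (Bof Z); split.
- exact: Bof_tr.
- exact: Bof_bd.
- by rewrite -bd_sym_Phi hZ (sym_id (@trmx1 _ n)) (bd1 Ppart).
- have hc : bd P (Pp Q *m Bof Z *m Pp Q) = 1%:M.
    by rewrite -bd_sym_Phi hZ (sym_id (@trmx1 _ n)) (bd1 Ppart).
  by have [h1 _] := core Ppart Qsym Qidem mu0 mu2 Hmu (or_intror erefl) (Bof_bd Z) hc.
Qed.

End Lin.

Lemma nrmZ (R : realType) n (c : R) (v : 'rV[R]_n) : nrm (c *: v) = c ^+ 2 * nrm v.
Proof. by rewrite /nrm ipZl ipZr mulrA expr2. Qed.

Lemma qfZ (R : realType) n (M : 'M[R]_n) (c : R) (v : 'rV[R]_n) :
  qf M (c *: v) = c ^+ 2 * qf M v.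
Proof. by rewrite !qfE -scalemxAl ipZl ipZr mulrA expr2. Qed.

Theorem corollary5p11 (R : realType) (n : nat) (P : {set {set 'I_n}})
  (U : 'M[R]_n) :
  finset.partition P [set: 'I_n] ->
  coherence P U < 1 / 2 ->
  realizable P U.
Proof.
move=> Ppart hmu.
pose B := row_base U.
have Bfree : row_free B by exact: row_base_free.
have BU : (B :=: U)%MS by exact: eq_row_base.
pose Q := projm B.
have Qsym : Q^T = Q by exact: projm_sym.
have Qidem : Q *m Q = Q by exact: projm_idem Bfree BU.
have orth x : orthproj U x = x *m Q.
  exact: (orthprojE Bfree BU x).
have nrmQ x : nrm (x *m Q) <= nrm x.
  have o : ip (x *m Q) (x - x *m Q) = 0.
    by rewrite ipC; apply: (projm_orth Bfree BU); exact: (projm_sub BU).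
  move: o; set a := x *m Q; set b := x - a => o.
  have e : x = a + b by rewrite /b addrC subrK.
  clearbody b a.
  have : nrm (a + b) = nrm a + 2 * ip a b + nrm b.
    by rewrite /nrm ipDl !ipDr (ipC b a); ring.
  rewrite -e.
  rewrite o mulr0 addr0 => ->; rewrite lerDl; exact: nrm_ge0.
set co := coherence P U in hmu.
pose mu := Num.max co 0.
have mu0 : 0 <= mu by rewrite le_max lexx orbT.
have mu2 : mu < 1 / 2 by rewrite gt_max hmu /=; lra.
have Hmu : forall I, I \in P -> forall y : 'rV[R]_n,
    y *m blk I = y -> qf Q y <= mu * nrm y.
  move=> I IP y hy.
  have [y0|ypos] := eqVneq (nrm y) 0.
    by rewrite (nrm_eq0 y0) qf0 nrm0 mulr0.
  have ygt : 0 < nrm y by rewrite lt_def ypos nrm_ge0.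
  pose s := Num.sqrt (nrm y).
  have s0 : 0 < s by rewrite sqrtr_gt0.
  have s2 : s ^+ 2 = nrm y by rewrite sqr_sqrtr // ltW.
  pose x := s^-1 *: y.
  have nx : nrm x = 1 by rewrite nrmZ exprVn s2 mulVf // lt0r_neq0.
  have ux : unit_supp I x.
    split; first by rewrite sqnormE.
    move=> j jI; rewrite mxE -hy /blk mul_mx_diag !mxE (negPf jI) mulr0 mulr0.
    by [].
  have memE : [set r : R | exists I : {set 'I_n}, I \in P /\
         exists x : 'rV[R]_n, unit_supp I x /\ r = sqnorm (orthproj U x)]%classic (qf Q x).
    exists I; split => //; exists x; split => //.
    by rewrite orth sqnormE -qfQ.
  have hs : has_sup [set r : R | exists I : {set 'I_n}, I \in P /\
         exists x : 'rV[R]_n, unit_supp I x /\ r = sqnorm (orthproj U x)]%classic.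
    split; first by eexists; exact: memE.
    exists 1 => r [J [JP [x' [[hx' _] ->]]]].
    by rewrite orth sqnormE -hx' sqnormE nrmQ.
  have hco : qf Q x <= co by exact: sup_upper_bound hs _ memE.
  have ey : y = s *: x by rewrite /x scalerA mulfV ?scale1r // lt0r_neq0.
  rewrite ey qfZ nrmZ nx mulr1 s2 mulrC; apply: ler_wpM2r; first exact: ltW.
  by apply: le_trans hco _; rewrite le_max lexx.
have [Bm [Bsym Bbd BE Bpos]] := exists_B Ppart Qsym Qidem mu0 mu2 Hmu.
exists (Pp Q *m Bm *m Pp Q); split; first (split; first split).
- by rewrite !trmx_mul Bsym Pp_sym // mulmxA.
- move=> x; have -> : (x *m (Pp Q *m Bm *m Pp Q) *m x^T) 0 0 = qf Bm (x *m Pp Q).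
    by rewrite /qf trmx_mul Pp_sym // !mulmxA.
  exact: Bpos.
- move=> I IP i j iI jI.
  by rewrite -(bd_entry_in Ppart I _ i j IP iI jI) BE mxE.
- move=> u uU.
  have h : Pp Q *m u^T = 0.
    have : u *m Q = u by exact: (projm_fix Bfree BU uU).
    move=> hu; have eq : Q *m u^T = (u *m Q)^T by rewrite trmx_mul Qsym.
    by rewrite /Pp mulmxBl mul1mx eq hu subrr.
  by rewrite -mulmxA h mulmx0.
Qed.
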